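(* Let $0<r<1$. For every measurable $f$ on $\Omega$, $$\mu(\{\mathcal{P}f>\lambda\})\le\frac1r\,\mu(\{|f|>\lambda\}),\qquad\lambda\ge0.$$ In particular, for $p\in(0,\infty)$, $\|\mathcal{P}\|_{L^p(\Omega)\to L^p(\Omega)}\le r^{-1/p}$.
   Context: $(\Omega,\mathcal{F},\mu)$ is a probability space with a filtration $\{\mathcal{F}_k\}_{k\ge0}$ whose union generates $\mathcal{F}$; $\mathsf{E}_k=\mathsf{E}[\cdot|\mathcal{F}_k]$. The $k$-th conditional percentile at ratio $r$ is $\mathsf{P}^r_kf(x):=\inf\{t\in\mathbb{Q}:\mathsf{E}_k[\mathbf{1}_{\{f>t\}}](x)\le r\}$, and $\mathcal{P}f:=\mathcal{P}_rf:=\sup_{k\ge0}\mathsf{P}^r_k|f|$. *)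

(* Defs.v *)
From HB Require Import structures.
From mathcomp Require Import all_boot all_order all_algebra.
From mathcomp Require Import all_classical all_reals all_analysis.
Set Implicit Arguments. Unset Strict Implicit. Unset Printing Implicit Defensive.
Import Order.TTheory GRing.Theory Num.Theory.
Local Open Scope classical_set_scope.
Local Open Scope ring_scope.

Definition is_filtration d (T : measurableType d) (F : nat -> set (set T)) :=
  [/\ (forall k, sigma_algebra setT (F k)),
      (forall k, F k `<=` measurable),
      (forall k, F k `<=` F k.+1) &
      <<s \bigcup_k F k >> = measurable].

Definition sub_measurable d (T : measurableType d) (R : realType)
  (G : set (set T)) (h : T -> R) :=
  forall B : set R, measurable B -> G (h @^-1` B).

Definition is_cond_exp d (T : measurableType d) (R : realType)
  (mu : {measure set T -> \bar R}) (G : set (set T)) (g h : T -> R) :=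
  [/\ sub_measurable G h,
      mu.-integrable setT (EFin \o h) &
      forall A, G A -> (\int[mu]_(x in A) (h x)%:E = \int[mu]_(x in A) (g x)%:E)%E].

(* E k A : a version of E_k[1_A].
   k-th conditional percentile at ratio r:
   P^r_k g (x) = inf { t in Q : E_k[1_{g > t}](x) <= r } *)
Definition cond_percentile d (T : measurableType d) (R : realType)
  (E : nat -> set T -> T -> R) (k : nat) (r : R) (g : T -> R) (x : T) : \bar R :=
  ereal_inf [set (ratr t : R)%:E | t in
              [set t : rat | E k [set y | ratr t < g y] x <= r]].

Definition max_percentile d (T : measurableType d) (R : realType)
  (E : nat -> set T -> T -> R) (r : R) (f : T -> R) (x : T) : \bar R :=
  ereal_sup (range (fun k => cond_percentile E k r (fun y => `|f y|) x)).

(* Main.v *)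
Require Import Defs.
From HB Require Import structures.
From mathcomp Require Import all_boot all_order all_algebra.
From mathcomp Require Import all_classical all_reals all_analysis.
From mathcomp Require Import measurable_realfun measurable_fun_approximation.
From mathcomp Require Import lra.
Import Order.TTheory GRing.Theory Num.Theory.
Local Open Scope classical_set_scope.
Local Open Scope ring_scope.

Set Implicit Arguments. Unset Strict Implicit. Unset Printing Implicit Defensive.
Section sa.
Context (T : Type) (G : set (set T)) (hG : sigma_algebra setT G).
Lemma sa0 : G set0. Proof. by case: hG. Qed.
Lemma saC A : G A -> G (~` A).
Proof. by case: hG => _ hC _ /hC; rewrite setTD. Qed.
Lemma saU A B : G A -> G B -> G (A `|` B).
Proof.
case: hG => h0 _ hU GA GB; rewrite -bigcup2E; apply: hU => -[|[|n]] //=.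
Qed.
Lemma saI A B : G A -> G B -> G (A `&` B).
Proof.
move=> GA GB; rewrite -[A `&` B]setCK setCI.
by apply: saC; apply: saU; exact: saC.
Qed.
Lemma saD A B : G A -> G B -> G (A `\` B).
Proof. by move=> GA GB; rewrite setDE; apply: saI => //; exact: saC. Qed.
Lemma sabigU (F : (set T)^nat) : (forall n, G (F n)) -> G (\bigcup_n F n).
Proof. by case: hG => _ _; apply. Qed.
Lemma sabigsetU (F : (set T)^nat) n : (forall m, (m < n)%N -> G (F m)) ->
  G (\big[setU/set0]_(k < n) F k).
Proof.
elim: n => [|n IH] GF; first by rewrite big_ord0; exact: sa0.
rewrite big_ord_recr /=; apply: saU; last exact: GF.
by apply: IH => m mn; apply: GF; exact: ltnW.
Qed.
Lemma saseqDU (F : (set T)^nat) n : (forall m, (m <= n)%N -> G (F m)) ->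
  G (seqDU F n).
Proof.
move=> GF; apply: saD; first exact: GF.
by apply: sabigsetU => m mn; apply: GF; exact: ltnW.
Qed.
End sa.
Lemma key_sum d (T : measurableType d) (R : realType)
  (mu : {measure set T -> \bar R}) (r : R) (S : (set T)^nat) (B : set T) :
  0 <= r -> (forall n, measurable (S n)) -> measurable B ->
  (forall n, r%:E * mu (seqDU S n) <= mu (seqDU S n `&` B))%E ->
  (r%:E * mu (\bigcup_n S n) <= mu (\bigcup_n S n `&` B))%E.
Proof.
move=> r0 mS mB H.
have mD := seqDU_measurable mS.
rewrite seqDU_bigcup_eq setI_bigcupl.
rewrite !measure_bigcup//; try (by move=> i _; exact: measurableI);
  try exact/trivIset_setIr/trivIset_seqDU; try exact: trivIset_seqDU.
rewrite -nneseriesZl//; apply: lee_nneseries => // i _.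
by rewrite mule_ge0// lee_fin.
Qed.
Lemma subm_mfun d (T : measurableType d) (R : realType) (G : set (set T)) (h : T -> R) :
  G `<=` measurable -> sub_measurable G h -> measurable_fun setT h.
Proof. by move=> GM hG _ B mB; rewrite setTI; apply: GM; exact: hG. Qed.

Lemma cond_bound d (T : measurableType d) (R : realType)
  (mu : {measure set T -> \bar R}) (G : set (set T)) (C : set T) (h : T -> R)
  (r : R) (A : set T) :
  G `<=` measurable -> is_cond_exp mu G (\1_C) h -> measurable C ->
  0 <= r -> G A -> A `<=` [set x | r < h x] ->
  (r%:E * mu A <= mu (A `&` C))%E.
Proof.
move=> GM [hG _ hI] mC r0 GA Ah.
have mA : measurable A := GM _ GA.
rewrite -integral_cst//.
apply: (@le_trans _ _ (\int[mu]_(x in A) (h x)%:E)%E).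
  apply: ge0_le_integral => //.
  - apply/measurable_EFinP; apply: measurable_funTS; exact: subm_mfun hG.
  - by move=> x /Ah /ltW; rewrite lee_fin.
by rewrite hI// integral_indic// setIC.
Qed.
Lemma inf_gt_rat (R : realType) (S : set (\bar R)) (l : R) :
  (l%:E < ereal_inf S)%E -> exists q : rat, l < ratr q /\ ((ratr q)%:E < ereal_inf S)%E.
Proof.
move=> lS.
have [y [ly yS]] : exists y : R, l < y /\ (y%:E <= ereal_inf S)%E.
  move: lS; case: (ereal_inf S) => [y| |] lS.
  - by exists y; split; [rewrite -lte_fin|].
  - by exists (l + 1); split; [rewrite ltrDl|rewrite leey].
  - by [].
have [q] := rat_in_itvoo ly; rewrite in_itv/= => /andP[lq qy].
by exists q; split => //; rewrite (lt_le_trans _ yS)// lte_fin.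
Qed.

Lemma Pk_gt d (T : measurableType d) (R : realType)
  (E : nat -> set T -> T -> R) k r (g : T -> R) x (l : R) :
  (l%:E < cond_percentile E k r g x)%E ->
  exists q : rat, l < ratr q /\ r < E k [set y | ratr q < g y] x.
Proof.
move=> /inf_gt_rat[q [lq qS]]; exists q; split => //.
rewrite ltNge; apply/negP => Er.
have : (cond_percentile E k r g x <= (ratr q)%:E)%E.
  by apply: ereal_inf_lbound; exists q.
by rewrite leNgt qS.
Qed.

Lemma bigcapT_measurable_rat' d (T : measurableType d) (F : rat -> set T) :
  (forall i, measurable (F i)) -> measurable (\bigcap_i F i).
Proof.
move=> mF; rewrite -[X in measurable X]setCK setC_bigcap; apply: measurableC.
by apply: bigcupT_measurable_rat => i; exact: measurableC.
Qed.

Lemma Pk_meas d (T : measurableType d) (R : realType)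
  (E : nat -> set T -> T -> R) k r (g : T -> R) (l : R) :
  (forall t : rat, measurable [set x | r < E k [set y | ratr t < g y] x]) ->
  measurable [set x | (l%:E < cond_percentile E k r g x)%E].
Proof.
move=> mE.
rewrite (_ : [set x | _] = \bigcup_(q : rat) (if l < ratr q then
   \bigcap_(t : rat) ([set x | r < E k [set y | ratr t < g y] x] `|`
      (if ratr q <= ratr t :> R then setT else set0)) else set0)).
  apply: bigcupT_measurable_rat => q; case: ifP => // _.
  apply: bigcapT_measurable_rat' => t; apply: measurableU => //.
  by case: ifP.
apply/seteqP; split => x /=.
  move=> /inf_gt_rat[q [lq qS]]; exists q => //; rewrite lq => t _.
  have [Er|Er] := ltP r (E k [set y | ratr t < g y] x); first by left.
  right; suff -> : ratr q <= ratr t :> R by [].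
  have : (cond_percentile E k r g x <= (ratr t)%:E)%E.
    by apply: ereal_inf_lbound; exists t.
  by move=> /(lt_le_trans qS); rewrite lte_fin => /ltW.
move=> [q _]; case: ifP => // lq H.
apply: (@lt_le_trans _ _ (ratr q)%:E); first by rewrite lte_fin.
apply: le_ereal_inf_tmp => _ [t /= Et <-].
have [/= Er|] := H t I; first by move: Et; rewrite leNgt Er.
by case: ifP => //; rewrite lee_fin.
Qed.

Lemma part1 d (T : measurableType d) (R : realType)
  (mu : probability T R) (F : nat -> set (set T)) (E : nat -> set T -> T -> R)
  (r : R) :
  is_filtration F ->
  (forall k (A : set T), measurable A -> is_cond_exp mu (F k) (\1_A) (E k A)) ->
  0 < r ->
  forall f : T -> R, measurable_fun setT f ->
  forall lam : R,
     measurable [set x | (lam%:E < max_percentile E r f x)%E] /\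
     (mu [set x | (lam%:E < max_percentile E r f x)%E]
       <= (r^-1)%:E * mu [set x | (lam < `|f x|)%R])%E.
Proof.
move=> [Fsig FM Fmono _] hE r0 f mf lam.
set g := fun y => `|f y|.
have mg : measurable_fun setT g by exact: measurableT_comp (@normr_measurable _ _) mf.
have mQ (t : R) : measurable [set y | t < g y].
  rewrite (_ : [set y | t < g y] = setT `&` g @^-1` `]t, +oo[%classic).
    exact: mg.
  by rewrite setTI; apply/seteqP; split => y; rewrite /preimage /= in_itv /= andbT.
have FE k t : F k [set x | r < E k [set y | t < g y] x].
  have [h1 _ _] := hE k _ (mQ t).
  rewrite (_ : [set x | _] = E k [set y | t < g y] @^-1` `]r, +oo[%classic).
    exact: h1.
  by apply/seteqP; split => y; rewrite /preimage /= in_itv /= andbT.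
have mE k t : measurable [set x | r < E k [set y | t < g y] x] by apply: FM.
have mPk k l : measurable [set x | (l%:E < cond_percentile E k r g x)%E].
  by apply: Pk_meas => t; exact: mE.
have Pf_eq : [set x | (lam%:E < max_percentile E r f x)%E] =
    \bigcup_k [set x | (lam%:E < cond_percentile E k r g x)%E].
  apply/seteqP; split => x /=.
    by move=> /ereal_sup_gt[_ [k _ <-]] lk; exists k.
  move=> [k _ lk]; apply: (lt_le_trans lk).
  by apply: ereal_sup_ubound; exists k.
have mPf : measurable [set x | (lam%:E < max_percentile E r f x)%E].
  by rewrite Pf_eq; apply: bigcupT_measurable => k; exact: mPk.
split => //.
pose H k n := match @unpickle rat n with
  | Some q => if lam < ratr q then [set x | r < E k [set y | ratr q < g y] x]
              else set0
  | None => set0 end.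
have HF k n : F k (H k n).
  rewrite /H; case: (unpickle n) => [q|]; last exact: sa0 (Fsig k).
  case: ifP => _; [exact: FE | exact: sa0 (Fsig k)].
pose G k := \bigcup_n H k n.
have GF k : F k (G k) by apply: sabigU => //; exact: HF.
have mG k : measurable (G k) by apply: FM.
have sub : [set x | (lam%:E < max_percentile E r f x)%E] `<=` \bigcup_k G k.
  rewrite Pf_eq => x [k _ /Pk_gt[q [lq Eq]]]; exists k => //.
  exists (pickle q); first exact: I.
  by rewrite /H pickleK lq; exact: Eq.
have Fmono_le j k : (j <= k)%N -> F j `<=` F k.
  move=> /subnK <-; elim: (k - j)%N => [|n IH]; first by rewrite add0n.
  by rewrite addSn; apply: subset_trans (Fmono _).
have mB : measurable [set x | lam < `|f x|] by exact: mQ.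
have inner k A : F k A -> A `<=` G k ->
    (r%:E * mu A <= mu (A `&` [set x | (lam < `|f x|)%R]))%E.
  move=> FA AG.
  have -> : A = \bigcup_n (A `&` H k n).
    apply/seteqP; split => x; last by move=> [n _ []].
    by move=> Ax; have [n _ Hx] := AG x Ax; exists n.
  apply: key_sum => //; first exact: ltW.
    by move=> n; apply: FM; apply: saI => //.
  move=> n.
  have FD : F k (seqDU (fun n => A `&` H k n) n).
    by apply: saseqDU => // m _; apply: saI.
  have DH : seqDU (fun n => A `&` H k n) n `<=` H k n by move=> x [[]].
  rewrite [X in _ `<=` X]/H in DH; move: DH.
  case: (unpickle n) => [q|]; last first.
    by rewrite subset0 => ->; rewrite measure0 mule0.
  case: ifP => lq; last by rewrite subset0 => ->; rewrite measure0 mule0.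
  move=> DH.
  apply: (le_trans (cond_bound (FM k) (hE k _ (mQ (ratr q))) (mQ _) (ltW r0) FD DH)).
  have mFD := FM _ _ FD.
  apply: le_measure; rewrite ?inE; [exact: measurableI|exact: measurableI|].
  by apply: setIS => x /= /(lt_trans lq).
have outer : (r%:E * mu (\bigcup_k G k) <= mu [set x | (lam < `|f x|)%R])%E.
  apply: (le_trans (key_sum (ltW r0) mG mB _)).
    move=> k; apply: inner.
      by apply: saseqDU => // j jk; apply: (Fmono_le j k).
    by move=> x [].
  apply: le_measure; rewrite ?inE; [|exact: mB|exact: subIsetr].
  by apply: measurableI => //; exact: bigcupT_measurable.
have mUG : measurable (\bigcup_k G k) by exact: bigcupT_measurable.
apply: (@le_trans _ _ (mu (\bigcup_k G k))).
  by apply: le_measure; rewrite ?inE.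
have rr : ((r^-1)%:E * r%:E = 1)%E by rewrite -EFinM mulVf ?gt_eqF.
rewrite -[X in (X <= _)%E]mul1e -rr -muleA.
by apply: lee_wpmul2l => //; rewrite lee_fin invr_ge0 ltW.
Qed.
Lemma exp_cmp d (T : measurableType d) (R : realType) (P : probability T R)
  (g h : T -> R) (c : R) : 0 <= c ->
  measurable_fun setT g -> measurable_fun setT h ->
  (forall x, 0 <= g x) -> (forall x, 0 <= h x) ->
  (forall s : R, 0 <= s -> (P [set x | (s < g x)%R] <= c%:E * P [set x | (s < h x)%R])%E) ->
  (\int[P]_x (g x)%:E <= c%:E * \int[P]_x (h x)%:E)%E.
Proof.
move=> c0 mg mh g0 h0 gh.
pose X : {RV P >-> R} := MeasurableFun.Pack (MeasurableFun.Class (isMeasurableFun.Build _ _ _ _ g mg)).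
pose Y : {RV P >-> R} := MeasurableFun.Pack (MeasurableFun.Class (isMeasurableFun.Build _ _ _ _ h mh)).
have -> : (\int[P]_x (g x)%:E = 'E_P[X])%E by rewrite expectation_def.
have -> : (\int[P]_x (h x)%:E = 'E_P[Y])%E by rewrite expectation_def.
rewrite !ge0_expectation_ccdf//.
rewrite -ge0_integralZl//; last first.
  exact: measurable_funTS (ccdf_measurable _).
apply: ge0_le_integral => //.
- exact: measurable_funTS (ccdf_measurable _).
- apply: measurable_funTS; apply: measurable_funeM; exact: ccdf_measurable.
move=> s; rewrite /= in_itv/= andbT => s0.
rewrite /ccdf /distribution /pushforward.
have EX (Z : T -> R) : Z @^-1` `]s, +oo[%classic = [set x | s < Z x].
  by apply/seteqP; split => x; rewrite /preimage /= in_itv /= andbT.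
by rewrite !EX; exact: (gh s s0).
Qed.
Lemma part2 d (T : measurableType d) (R : realType)
  (mu : probability T R) (F : nat -> set (set T)) (E : nat -> set T -> T -> R)
  (r : R) :
  is_filtration F ->
  (forall k (A : set T), measurable A -> is_cond_exp mu (F k) (\1_A) (E k A)) ->
  0 < r < 1 ->
  forall f : T -> R, measurable_fun setT f ->
  (forall p : R, 0 < p ->
     (Lnorm mu (EFin p) (max_percentile E r f)
       <= EFin (r^-1 `^ p^-1)%R * Lnorm mu (EFin p) (EFin \o f))%E).
Proof.
move=> hF hE /andP[r0 r1] f mf p p0.
have P1 := part1 hF hE r0 mf.
have [Fsig FM _ _] := hF.
set Pf := max_percentile E r f.
have mPf : measurable_fun setT Pf.
  apply: (measurability _ (ErealGenOInfty.measurableE R)) => // _ [_ [y ->] <-].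
  rewrite setTI (_ : _ @^-1` _ = [set x | (y%:E < Pf x)%E]); first exact: (P1 y).1.
  by apply/seteqP; split => x; rewrite /preimage /= in_itv /= andbT.
pose A0 := [set x | E 0 setT x <= r].
have [hE0m hE0i hE0] := hE 0 setT measurableT.
have FA0 : F 0 A0.
  rewrite (_ : A0 = E 0 setT @^-1` `]-oo, r]%classic); first exact: hE0m.
  by apply/seteqP; split => x; rewrite /preimage /= in_itv /=.
have mA0 : measurable A0 by exact: FM FA0.
have A00 : mu A0 = 0%E.
  have hI := hE0 A0 FA0.
  rewrite integral_indic// setTI in hI.
  have le : (mu A0 <= r%:E * mu A0)%E.
    rewrite -integral_cst// -[X in (X <= _)%E]hI; apply: le_integral => //.
    - exact: integrableS measurableT mA0 (@subsetT _ _) hE0i.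
    - exact: finite_measure_integrable_cst.
    - by move=> x; rewrite inE => A0x; rewrite lee_fin.
  have fin : mu A0 \is a fin_num by exact: fin_num_measure.
  have a0 : 0 <= fine (mu A0) by apply: fine_ge0; exact: measure_ge0.
  rewrite -(fineK fin) in le *.
  move: le; rewrite -EFinM lee_fin => le.
  congr EFin; nra.
have Pf0 x : ~ A0 x -> (0 <= Pf x)%E.
  move=> nA0.
  apply: (@le_trans _ _ (cond_percentile E 0 r (fun y => `|f y|) x)); last first.
    by apply: ereal_sup_ubound; exists 0%N.
  apply: le_ereal_inf_tmp => _ [t /= Et <-]; rewrite lee_fin leNgt.
  apply/negP => tneg; apply: nA0; rewrite /A0 /=.
  suff <- : [set y | ratr t < `|f y|] = setT by [].
  by apply/seteqP; split => // y _ /=; exact: lt_le_trans tneg (normr_ge0 _).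
have mlt (g : T -> R) (t : R) : measurable_fun setT g -> measurable [set x | t < g x].
  move=> mg; rewrite (_ : [set x | _] = setT `&` g @^-1` `]t, +oo[%classic).
    exact: mg.
  by rewrite setTI; apply/seteqP; split => y; rewrite /preimage /= in_itv /= andbT.
have mfa : measurable_fun setT (fun x => `|f x|).
  exact: measurableT_comp (@normr_measurable _ _) mf.
pose Zp := [set x | Pf x = +oo%E].
have mZp : measurable Zp.
  rewrite (_ : Zp = setT `&` Pf @^-1` [set +oo%E]).
    exact: mPf measurableT _ (emeasurable_set1 _).
  by rewrite setTI.
have Zp0 : mu Zp = 0%E.
  pose Fn n := [set x | (n%:R < `|f x|)%R].
  have mFn n : measurable (Fn n) by exact: mlt.
  have cv : mu (Fn n) @[n --> \oo] --> 0%E.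
    rewrite -(measure0 mu).
    have <- : \bigcap_n Fn n = set0.
      rewrite -subset0 => t /(_ (Num.bound `|f t|) I); rewrite /Fn /=.
      by rewrite ltNge (ltW (archi_boundP (normr_ge0 _))).
    apply: nonincreasing_cvg_mu => [| | |m n mn].
    - by rewrite -ge0_fin_numE// fin_num_measure.
    - exact: mFn.
    - exact: bigcapT_measurable.
    - by apply/subsetPset => x /=; apply: le_lt_trans; rewrite ler_nat.
  have bnd n : (r%:E * mu Zp <= mu (Fn n))%E.
    have [mPn Pn] := P1 n%:R.
    apply: (@le_trans _ _ (r%:E * mu [set x | (n%:R%:E < Pf x)%E])%E).
      apply: lee_wpmul2l; first by rewrite lee_fin ltW.
      apply: le_measure; rewrite ?inE //.
      by move=> x; rewrite /Zp /= => ->; exact: ltry.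
    have r0e : (0 <= r%:E)%E by rewrite lee_fin ltW.
    apply: le_trans (lee_wpmul2l r0e Pn) _.
    by rewrite muleA -EFinM mulfV ?gt_eqF// mul1e.
  have : (r%:E * mu Zp <= 0)%E.
    rewrite -(cvg_lim _ cv) //; apply: lime_ge; first by apply/cvg_ex; exists 0%E.
    exact: nearW.
  rewrite pmule_rle0 ?lte_fin // => h.
  by apply/eqP; rewrite eq_le h measure_ge0.
pose g x := (fine (Pf x)) `^ p.
pose h x := `|f x| `^ p.
have mg : measurable_fun setT g.
  apply: (measurableT_comp (f := @powR R ^~ p) (g := fine \o Pf)); first exact: measurable_powR.
  apply: measurableT_comp mPf; exact: fine_measurable.
have mh : measurable_fun setT h.
  apply: (measurableT_comp (f := @powR R ^~ p) (g := fun x => `|f x|)) => //; exact: measurable_powR.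
have I1 : (\int[mu]_x (`|Pf x| `^ p) = \int[mu]_x (g x)%:E)%E.
  apply: ae_eq_integral => //.
    apply: (measurableT_comp (f := poweR ^~ p) (g := abse \o Pf)); first exact: measurable_poweR.
    apply: measurableT_comp mPf; exact: abse_measurable.
  - exact/measurable_EFinP.
  exists (Zp `|` A0); split.
  - exact: measurableU.
  - by rewrite measureU0.
  move=> x /= nx; apply: contrapT => nZA; apply: nx => _.
  have nZ : ~ Zp x by move=> ?; apply: nZA; left.
  have nA : ~ A0 x by move=> ?; apply: nZA; right.
  have := Pf0 x nA; rewrite /g /Zp /= in nZ *.
  case: (Pf x) nZ => [y| |] //= _ y0.
  by rewrite ?abse_EFin ?poweR_EFin ger0_norm// -lee_fin.
have I2 : (\int[mu]_x (`|(EFin \o f) x| `^ p) = \int[mu]_x (h x)%:E)%E.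
  by apply: eq_integral => x _; rewrite /= ?abse_EFin ?poweR_EFin.
have Hs (s : R) : 0 <= s ->
    (mu [set x | (s < g x)%R] <= (r^-1)%:E * mu [set x | (s < h x)%R])%E.
  move=> s0.
  pose lam := s `^ p^-1.
  have lam0 : 0 <= lam := powR_ge0 _ _.
  have lamp : lam `^ p = s by rewrite -powRrM mulVf ?gt_eqF // powRr1.
  have sub1 : [set x | (s < g x)%R] `<=` [set x | (lam%:E < Pf x)%E] `|` A0.
    move=> x /= sg; have [A0x|nA0] := pselect (A0 x); [by right|left].
    have := Pf0 x nA0; move: sg; rewrite /g.
    case: (Pf x) => [y| |] //= sg y0; last exact: ltry.
    rewrite lte_fin ltNge; apply/negP => yl.
    have : y `^ p <= lam `^ p.
      by apply: ge0_ler_powR => //; exact: ltW.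
    by rewrite lamp leNgt sg.
  have sub2 : [set x | (lam < `|f x|)%R] `<=` [set x | (s < h x)%R].
    move=> x /= lf; rewrite /h -lamp.
    by apply: gt0_ltr_powR => //; rewrite nnegrE.
  have [mP Pl] := P1 lam.
  apply: (@le_trans _ _ (mu ([set x | (lam%:E < Pf x)%E] `|` A0))).
    by apply: le_measure; rewrite ?inE //; [exact: mlt|exact: measurableU].
  rewrite measureU0 //.
  apply: (le_trans Pl); apply: lee_wpmul2l; first by rewrite lee_fin invr_ge0 ltW.
  by apply: le_measure; rewrite ?inE //; exact: mlt.
have cmp : (\int[mu]_x (g x)%:E <= (r^-1)%:E * \int[mu]_x (h x)%:E)%E.
  apply: exp_cmp => //; first by rewrite invr_ge0 ltW.
  - by move=> x; exact: powR_ge0.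
  - by move=> x; exact: powR_ge0.
rewrite unlock /= I1 I2.
have i0 : (0 <= \int[mu]_x (h x)%:E)%E.
  by apply: integral_ge0 => x _; rewrite lee_fin powR_ge0.
rewrite -poweR_EFin -poweRM //; last by rewrite lee_fin invr_ge0 ltW.
apply: gt0_ler_poweR => //.
- by rewrite invr_ge0 ltW.
- rewrite in_itv /= leey andbT.
  by apply: integral_ge0 => x _; rewrite lee_fin powR_ge0.
- rewrite in_itv /= leey andbT.
  by apply: mule_ge0 => //; rewrite lee_fin invr_ge0 ltW.
Qed.

Unset Implicit Arguments. Set Strict Implicit.

Theorem lemma1p1 (d : measure_display) (T : measurableType d) (R : realType)
  (mu : probability T R) (F : nat -> set (set T)) (E : nat -> set T -> T -> R)
  (r : R) :
  is_filtration F ->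
  (forall k (A : set T), measurable A -> is_cond_exp mu (F k) (\1_A) (E k A)) ->
  0 < r < 1 ->
  forall f : T -> R, measurable_fun setT f ->
  (forall lam : R, 0 <= lam ->
     (mu [set x | (EFin lam < max_percentile E r f x)%E]
       <= EFin (r^-1)%R * mu [set x | (lam < `|f x|)%R])%E) /\
  (forall p : R, 0 < p ->
     (Lnorm mu (EFin p) (max_percentile E r f)
       <= EFin (r^-1 `^ p^-1)%R * Lnorm mu (EFin p) (EFin \o f))%E).
Proof.
move=> hF hE hr f mf; split.
- move=> lam _; have /andP[r0 _] := hr.
  exact: (part1 hF hE r0 mf lam).2.
- have H := part2 hF hE hr mf; exact: H.
Qed.
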